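(* Let $\mathbf{F}\in\mathbb{K}[x]^{n\times n}$ be nonsingular and column reduced with column degrees $\vec d=[d_1,\dots,d_n]$, $d_{\max}=\max_i d_i$, let $\mathbf{H}$ be its Hermite normal form, $s_i=\deg h_{ii}$, $\vec s=[s_1,\dots,s_n]$. For each $i$ let $q_i,r_i$ be the quotient and remainder of $s_i$ divided by $d_{\max}$, let $\tilde{\mathbf{E}}_i=[e_i,\,x^{s_i-q_id_{\max}}e_i,\,x^{s_i-(q_i-1)d_{\max}}e_i,\dots,x^{s_i-d_{\max}}e_i]$ ($q_i+1$ columns, $e_i$ the $i$-th column of the $n\times n$ identity), $\mathbf{E}=[\tilde{\mathbf{E}}_1,\dots,\tilde{\mathbf{E}}_n]\in\mathbb{K}[x]^{n\times\bar n}$ with $\bar n=n+\sum_i q_i$, and $\vec{s^*}=[\vec{s^*}_1,\dots,\vec{s^*}_n]\in\mathbb{Z}^{\bar n}$ with $\vec{s^*}_i=[r_i,d_{\max},\dots,d_{\max}]$ ($q_i+1$ components). Suppose $\mathbf{E}=\mathbf{F}\mathbf{Q}+\mathbf{R}$ with $\mathbf{Q},\mathbf{R}$ polynomial matrices and $\deg\mathbf{R}<d_{\max}$. Let $\vec{u^*}=[2d_{\max},\dots,2d_{\max}]\in\mathbb{Z}^n$ and let $\mathbf{N}=\begin{bmatrix}\mathbf{N}_u\\ \mathbf{N}_d\end{bmatrix}$ be a $[-\vec{u^*},-\vec{s^*}]$-minimal right kernel basis of $[\mathbf{F},-\mathbf{R}]$, where $\mathbf{N}_d$ consists of the last $\bar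 n$ rows. Let $\bar{\mathbf{N}}$ be the matrix of the columns of $\mathbf{N}_d$ whose $-\vec{s^*}$-column degrees are at most $0$. Then $\mathbf{H}$ is a column basis of $\mathbf{E}\bar{\mathbf{N}}$, and the nonzero columns of $\mathbf{E}\bar{\mathbf{N}}$ have $-\vec s$-column degree $0$.
   Context: $\mathbb{K}$ is a field. Hermite normal form of nonsingular $\mathbf{F}$: the unique $\mathbf{H}=\mathbf{F}\mathbf{U}$, $\mathbf{U}$ unimodular, lower triangular with monic diagonal entries $h_{ii}$ and $\deg h_{ij}<\deg h_{ii}$ for $j<i$. For a column vector $\mathbf{p}=[p_1,\dots,p_m]^T$ and shift $\vec t\in\mathbb{Z}^m$, $\mathrm{cdeg}_{\vec t}\,\mathbf{p}=\max_i(\deg p_i+t_i)$; for a matrix, the list of these for its columns. With $\vec c$ the column degrees of $\mathbf{P}$, $\mathbf{P}$ is column reduced if the matrix of coefficients of $x^{c_j}$ in $p_{ij}$ has full column rank, and $\vec t$-column reduced if $\mathrm{diag}(x^{t_1},\dots,x^{t_m})\mathbf{P}$ is column reduced. A right kernel basis of $\mathbf{A}$ is a full-rank $\mathbf{N}$ with $\mathbf{A}\mathbf{N}=0$ whose columns generate $\{\mathbf{q}:\mathbf{A}\mathbf{q}=0\}$ over $\mathbb{K}[x]$; it is $\vec t$-minimal if also $\vec t$-column reduced. A column basis of $\mathbf{A}$ is a full-rank matrix whose columns form a basis of the $\mathbb{K}[x]$-module generated by the columns of $\mathbf{A}$. $\deg\mathbf{R}$ is the maximum degree of the entries of $\mathbf{R}$.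 *)

(* Defs.v *)
From HB Require Import structures.
From mathcomp Require Import all_boot all_order all_algebra.
Set Implicit Arguments. Unset Strict Implicit. Unset Printing Implicit Defensive.
Import Order.TTheory GRing.Theory Num.Theory.
Local Open Scope ring_scope.

Section PolyMatrixDefs.
Context {K : fieldType}.

(* degree of a NONZERO polynomial (only used on nonzero polynomials) *)
Definition pdeg (p : {poly K}) : int := ((size p).-1)%:Z.

Definition omax (a b : option int) : option int :=
  match a, b with
  | None, _ => b
  | _, None => a
  | Some x, Some y => Some (Num.max x y)
  end.

(* t-shifted column degree of column j of P : max_i (deg p_ij + t_i);
   None stands for -oo (zero column). *)
Definition cdeg m n (t : 'I_m -> int) (P : 'M[{poly K}]_(m, n)) (j : 'I_n)
  : option int :=
  \big[omax/None]_(i < m | P i j != 0) Some (pdeg (P i j) + t i).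

Definition cdeg_le m n (t : 'I_m -> int) (P : 'M[{poly K}]_(m, n)) (j : 'I_n)
  (b : int) : bool :=
  if cdeg t P j is Some c then c <= b else true.

Definition lmat m n (t : 'I_m -> int) (P : 'M[{poly K}]_(m, n)) : 'M[K]_(m, n) :=
  \matrix_(i, j)
    match cdeg t P j with
    | Some c => if 0 <= c - t i then (P i j)`_(absz (c - t i)) else 0
    | None => 0
    end.

Definition col_reduced_shift m n (t : 'I_m -> int) (P : 'M[{poly K}]_(m, n)) :=
  \rank (lmat t P) = n.

Definition col_reduced m n (P : 'M[{poly K}]_(m, n)) :=
  col_reduced_shift (fun _ => 0) P.

Definition full_col_rank m n (P : 'M[{poly K}]_(m, n)) :=
  forall v : 'cV[{poly K}]_n, P *m v = 0 -> v = 0.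

Definition right_kernel_basis m p k (A : 'M[{poly K}]_(m, p))
  (N : 'M[{poly K}]_(p, k)) :=
  [/\ full_col_rank N, A *m N = 0 &
      forall q : 'cV[{poly K}]_p, A *m q = 0 ->
        exists v : 'cV[{poly K}]_k, q = N *m v].

Definition minimal_kernel_basis m p k (A : 'M[{poly K}]_(m, p))
  (N : 'M[{poly K}]_(p, k)) (t : 'I_p -> int) :=
  right_kernel_basis A N /\ col_reduced_shift t N.

Definition column_basis m p r (A : 'M[{poly K}]_(m, p)) (B : 'M[{poly K}]_(m, r)) :=
  [/\ full_col_rank B,
      exists U : 'M[{poly K}]_(r, p), A = B *m U &
      exists V : 'M[{poly K}]_(p, r), B = A *m V].

Definition unimodular n (U : 'M[{poly K}]_n) :=
  exists V : 'M[{poly K}]_n, U *m V = 1%:M /\ V *m U = 1%:M.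

Definition hermite_form n (F H : 'M[{poly K}]_n) :=
  [/\ exists U : 'M[{poly K}]_n, unimodular U /\ H = F *m U,
      forall i j : 'I_n, (i < j)%N -> H i j = 0,
      forall i : 'I_n, H i i \is monic &
      forall i j : 'I_n, (j < i)%N -> (size (H i j) < size (H i i))%N].

Definition coldeg m n (F : 'M[{poly K}]_(m, n)) (j : 'I_n) : nat :=
  (\max_(i < m) (size (F i j)).-1)%N.
Definition dmax n (F : 'M[{poly K}]_n) : nat := (\max_(j < n) coldeg F j)%N.

Definition sdeg n (H : 'M[{poly K}]_n) (i : 'I_n) : nat := (size (H i i)).-1.
Definition qq n (F H : 'M[{poly K}]_n) (i : 'I_n) : nat := (sdeg H i %/ dmax F)%N.
Definition rr n (F H : 'M[{poly K}]_n) (i : 'I_n) : nat := (sdeg H i %% dmax F)%N.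
Definition nbar n (F H : 'M[{poly K}]_n) : nat := (\sum_(i < n) (qq F H i).+1)%N.

Definition Etilde n (F H : 'M[{poly K}]_n) (i : 'I_n)
  : 'M[{poly K}]_(n, (qq F H i).+1) :=
  \matrix_(r, k)
    if r == i then
      (if k == ord0 then 1
       else 'X^(sdeg H i - (qq F H i - (k : nat).-1) * dmax F)%N)
    else 0.
Arguments Etilde {n} F H i.

Definition Emat n (F H : 'M[{poly K}]_n) : 'M[{poly K}]_(n, nbar F H) :=
  \mxrow_(i < n) Etilde F H i.

Definition sstar_row n (F H : 'M[{poly K}]_n) : 'rV[int]_(nbar F H) :=
  \mxrow_(i < n)
    (\row_(k < (qq F H i).+1)
       (if k == ord0 then (rr F H i)%:Z else (dmax F)%:Z)).

Definition sstar n (F H : 'M[{poly K}]_n) (j : 'I_(nbar F H)) : int :=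
  sstar_row F H 0 j.
Arguments sstar {n} F H j.

Definition kshift n (F H : 'M[{poly K}]_n) (j : 'I_(n + nbar F H)) : int :=
  match split j with
  | inl _ => - ((2 * dmax F)%N)%:Z
  | inr j' => - sstar F H j'
  end.
Arguments kshift {n} F H j.

Definition selcols m k (P : pred 'I_k) (M : 'M[{poly K}]_(m, k))
  : 'M[{poly K}]_(m, #|P|) :=
  colsub (@enum_val _ (mem P)) M.

End PolyMatrixDefs.
Arguments sstar {K n} F H j.
Arguments kshift {K n} F H j.
Arguments Etilde {K n} F H i.

(* Main.v *)
Require Import Defs.
From HB Require Import structures.
From mathcomp Require Import all_boot all_order all_algebra.
From mathcomp Require Import zify.
Set Implicit Arguments. Unset Strict Implicit. Unset Printing Implicit Defensive.
Import Order.TTheory GRing.Theory Num.Theory.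
Local Open Scope ring_scope.

Lemma omax_big (I : eqType) (r : seq I) (P : pred I) (f : I -> int) :
  (\big[omax/None]_(i <- r | P i) Some (f i) = None /\ forall i, i \in r -> ~~ P i) \/
  exists c, \big[omax/None]_(i <- r | P i) Some (f i) = Some c /\
    (forall i, i \in r -> P i -> f i <= c) /\ exists2 i, i \in r & P i /\ c = f i.
Proof.
elim: r => [|a r IH]; first by left; rewrite big_nil.
rewrite big_cons; case: ifP => Pa.
  right; case: IH => [[-> Hn]|[c [-> [Hb [i ir [Pi ci]]]]]].
    exists (f a); split=> //; split.
      by move=> i; rewrite inE => /orP[/eqP->//|/Hn /negPf->].
    by exists a; rewrite ?inE ?eqxx.
  exists (Num.max (f a) c); split=> //; split.
    move=> j; rewrite inE => /orP[/eqP->|jr Pj]; first by rewrite le_max lexx.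
    by rewrite le_max (Hb j jr Pj) orbT.
  case: (leP (f a) c) => _.
    by exists i; rewrite ?inE ?ir ?orbT.
  by exists a; rewrite ?inE ?eqxx.
case: IH => [[-> Hn]|[c [-> [Hb [i ir [Pi ci]]]]]].
  by left; split=> // i; rewrite inE => /orP[/eqP->|/Hn]; rewrite ?Pa.
right; exists c; split=> //; split.
  by move=> j; rewrite inE => /orP[/eqP->|/Hb//]; rewrite Pa.
by exists i; rewrite ?inE ?ir ?orbT.
Qed.

Section S.
Variable K : fieldType.

Lemma cdegP m n (t : 'I_m -> int) (P : 'M[{poly K}]_(m, n)) j :
  (cdeg t P j = None /\ forall i, P i j = 0) \/
  exists c, cdeg t P j = Some c /\
    (forall i, P i j != 0 -> pdeg (P i j) + t i <= c) /\
    exists2 i, P i j != 0 & c = pdeg (P i j) + t i.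
Proof.
rewrite /cdeg; case: (omax_big (index_enum 'I_m) (fun i => P i j != 0)
   (fun i => pdeg (P i j) + t i)) => [[-> Hn]|[c [-> [Hb [i _ [Pi ci]]]]]].
  by left; split=> // i; apply/eqP; rewrite -[_ == _]negbK Hn ?mem_index_enum.
by right; exists c; split=> //; split; [move=> i0; apply: Hb; rewrite mem_index_enum|exists i].
Qed.

Lemma cdeg_bound m n (t : 'I_m -> int) (P : 'M[{poly K}]_(m, n)) j c i :
  cdeg t P j = Some c -> P i j != 0 -> pdeg (P i j) + t i <= c.
Proof. by case: (cdegP t P j) => [[->//]|[c' [-> [Hb _]]] [<-]]; apply: Hb. Qed.

Lemma cdeg_le_all m n (t : 'I_m -> int) (P : 'M[{poly K}]_(m, n)) j b :
  (forall i, P i j != 0 -> pdeg (P i j) + t i <= b) -> cdeg_le t P j b.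
Proof.
rewrite /cdeg_le; case: (cdegP t P j) => [[->//]|[c [-> [_ [i Pi ->]]]]].
by move=> H; apply: H.
Qed.

Lemma cdeg_leP m n (t : 'I_m -> int) (P : 'M[{poly K}]_(m, n)) j b i :
  cdeg_le t P j b -> P i j != 0 -> pdeg (P i j) + t i <= b.
Proof.
rewrite /cdeg_le; case: (cdegP t P j) => [[-> Hz] _ Pi|[c [-> [Hb _]]] cb Pi].
  by rewrite Hz eqxx in Pi.
exact: le_trans (Hb _ Pi) cb.
Qed.

Lemma cdeg_ge m n (t : 'I_m -> int) (P : 'M[{poly K}]_(m, n)) j i :
  P i j != 0 -> exists2 c, cdeg t P j = Some c & pdeg (P i j) + t i <= c.
Proof.
case: (cdegP t P j) => [[_ H]|[c [-> [Hb _]]] Pi]; first by rewrite H eqxx.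
by exists c => //; apply: Hb.
Qed.


Lemma coefM_top (p q : {poly K}) a b : (size p <= a.+1)%N -> (size q <= b.+1)%N ->
  (p * q)`_(a + b) = p`_a * q`_b.
Proof.
move=> sp sq; rewrite coefM (bigD1 (Ordinal (ltn_addr b (ltnSn a)))) //= big1 ?addr0.
  by rewrite addKn.
move=> i /eqP ne; have : (val i != a) by apply/eqP=> e; apply: ne; apply: val_inj.
case: (ltngtP i a) => // ia _.
  by rewrite (nth_default 0 (_ : size q <= a + b - i)%N) ?mulr0 //; apply: leq_trans sq _; lia.
by rewrite (nth_default 0 (_ : size p <= i)%N) ?mul0r //; apply: leq_trans sp _; lia.
Qed.

Lemma lmat_inj m p (t : 'I_m -> int) (P : 'M[{poly K}]_(m, p)) (lam : 'cV[K]_p) :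
  col_reduced_shift t P -> lmat t P *m lam = 0 -> lam = 0.
Proof.
move=> hr hl; apply: trmx_inj; rewrite trmx0; apply/eqP.
have hf : row_free (lmat t P)^T by rewrite /row_free mxrank_tr hr.
by rewrite -(mulmx_free_eq0 _ hf) -trmx_mul hl trmx0.
Qed.

Lemma col_red_some m p (t : 'I_m -> int) (P : 'M[{poly K}]_(m, p)) j :
  col_reduced_shift t P -> exists c, cdeg t P j = Some c.
Proof.
move=> hr; case e: (cdeg t P j) => [c|]; first by exists c.
have : lmat t P *m (delta_mx j 0 : 'cV[K]_p) = 0.
  apply/matrixP=> i k; rewrite !mxE (bigD1 j) //= big1 ?addr0.
    by rewrite !mxE e mul0r.
  by move=> l /negPf ne; rewrite !mxE ne mulr0.
move/(lmat_inj hr)/matrixP/(_ j 0); rewrite !mxE !eqxx => /eqP.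
by rewrite oner_eq0.
Qed.

Lemma pdeg_ge0 (q : {poly K}) : 0 <= pdeg q.
Proof. by []. Qed.

Lemma pdp m p (t : 'I_m -> int) (P : 'M[{poly K}]_(m, p)) (w : 'cV[{poly K}]_p)
    (c : 'I_p -> int) :
  col_reduced_shift t P -> (forall j, cdeg t P j = Some (c j)) ->
  forall j0, w j0 0 != 0 ->
  exists2 c', cdeg t (P *m w) 0 = Some c' & pdeg (w j0 0) + c j0 <= c'.
Proof.
move=> hr hc j0 wj0.
pose val : 'I_p -> int := fun j => pdeg (w j 0) + c j.
have [jm' wjm Hjm] : exists2 jm, w jm 0 != 0 & forall j, w j 0 != 0 -> val j <= val jm.
  case: (@Order.TotalTheory.arg_maxP _ _ _ j0 (fun j => w j 0 != 0) val wj0) => j1 wj1 H1.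
  by exists j1.
pose M : int := val jm'.
pose lam : 'cV[K]_p := \col_j (if (w j 0 != 0) && (val j == M) then lead_coef (w j 0) else 0).
have lam0 : lam != 0.
  apply/eqP=> /matrixP/(_ jm' 0); rewrite !mxE wjm eqxx /= => /eqP.
  by rewrite lead_coef_eq0 (negPf wjm).
have [i hi] : exists i, (lmat t P *m lam) i 0 != 0.
  apply/existsP; rewrite -negb_forall; apply/negP=> /forallP H.
  move/negP: lam0; apply; apply/eqP; apply: (lmat_inj hr); apply/matrixP=> a b.
  by rewrite ord1; apply/eqP; rewrite [X in _ == X]mxE; apply: H.
have hMt : 0 <= M - t i.
  rewrite leNgt; apply/negP=> hneg; move/negP: hi; apply; apply/eqP.
  rewrite !mxE big1 // => j _; rewrite !mxE hc.
  case: (boolP ((w j 0 != 0) && (val j == M))) => [/andP[_ /eqP vj]|_]; last by rewrite mulr0.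
  case: ifP=> [h|]; last by rewrite mul0r.
  move: h hneg vj; rewrite /M /val.
  have := pdeg_ge0 (w j 0); lia.
have key : (lmat t P *m lam) i 0 = ((P *m w) i 0)`_(absz (M - t i)).
  rewrite !mxE coef_sum; apply: eq_bigr => j _; rewrite !mxE hc.
  have hb : P i j != 0 -> pdeg (P i j) + t i <= c j.
    by move=> nz; apply: (cdeg_bound (hc j) nz).
  have hvj : w j 0 != 0 -> val j <= M by move=> nz; apply: Hjm.
  case: (eqVneq (w j 0) 0) => [->|wnz]; first by rewrite mulr0 /= mulr0 coef0.
  case: (eqVneq (P i j) 0) => [->|pnz].
    by rewrite mul0r coef0; case: ifP => _; rewrite ?coef0 ?mul0r.
  have hb' := hb pnz; have hv := hvj wnz; move: hb' hv.
  rewrite /val /pdeg /=; move: (w j 0) wnz => wj wnz.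
  move: (P i j) pnz => pij pnz hb' hv.
  have hsP : (0 < size pij)%N by rewrite size_poly_gt0.
  have hsw : (0 < size wj)%N by rewrite size_poly_gt0.
  have e2 : (0:int) <= M - t i := hMt.
  have e3 : Posz (size pij).-1 + t i <= c j := hb'.
  have e4 : Posz (size wj).-1 + c j <= M := hv.
  move: (M) e2 e4 => M0 e2 e4.
  case: eqP => [vjM|vjM] /=.
    have e1 : Posz (size wj).-1 + c j = M0 := vjM.
    have -> : 0 <= c j - t i by lia.
    have -> : absz (M0 - t i) = (absz (c j - t i) + (size wj).-1)%N by lia.
    rewrite coefM_top; first by rewrite lead_coefE.
      by lia.
    by lia.
  have e1 : Posz (size wj).-1 + c j != M0 by apply/eqP.
  rewrite mulr0 nth_default //.
  apply: leq_trans (size_polyMleq _ _) _.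
  move/eqP: e1; lia.
have hnz : (P *m w) i 0 != 0 by apply: contraNneq hi => e; rewrite key e coef0.
have [c' hc' hle] := cdeg_ge t hnz.
exists c' => //.
have hs : (absz (M - t i) < size ((P *m w) i ord0))%N.
  rewrite ltnNge; apply: contraNN hi => hs; rewrite key nth_default //.
have e5 := Hjm j0 wj0.
have e6 : pdeg ((P *m w) i ord0) + t i <= c' := hle.
have e7 : (0:int) <= M - t i := hMt.
have e8 : pdeg (w j0 0) + c j0 <= M := e5.
move: e6 e7 e8 hs; rewrite /pdeg; move: (M) => M0; lia.
Qed.

End S.


Section S3.
Variable K : fieldType.

Lemma size_sum_le (I : finType) (P : pred I) (G : I -> {poly K}) N :
  (forall i, P i -> (size (G i) <= N)%N) -> (size (\sum_(i | P i) G i)%R <= N)%N.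
Proof.
move=> hG; elim/big_ind: _ => //; first by rewrite size_poly0.
by move=> x y hx hy; apply: leq_trans (size_polyD _ _) _; rewrite geq_max hx hy.
Qed.

Lemma expand d r q (p : {poly K}) : (size p <= (q * d + r).+1)%N ->
  exists c : nat -> {poly K},
    [/\ p = c 0%N + \sum_(1 <= m < q.+1) c m * 'X^(r + (m.-1) * d),
        (size (c 0%N) <= r.+1)%N &
        forall m, (1 <= m <= q)%N -> (size (c m) <= d.+1)%N].
Proof.
elim: q p => [|q IH] p hp.
  exists (fun m => if m == 0%N then p else 0); split.
  - by rewrite big_geq // addr0.
  - by rewrite /=; move: hp; rewrite mul0n add0n.
  - by move=> m; case: m.
pose pl := take_poly (r + q * d) p; pose ph := drop_poly (r + q * d) p.
have hpl : (size pl <= (q * d + r).+1)%N.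
  by apply: leq_trans (size_take_poly _ _) _; rewrite addnC leqnSn.
have [c' [e0 e1 e2]] := IH pl hpl.
exists (fun m => if m == q.+1 then ph else c' m); split.
- rewrite big_nat_recr //= eqxx /=.
  rewrite (@eq_big_nat _ _ _ 1 q.+1 _ (fun m => c' m * 'X^(r + m.-1 * d))); last first.
    by move=> m /andP[_ hm]; rewrite ifN // neq_ltn hm.
  by rewrite addrA -e0 /pl /ph poly_take_drop.
- by [].
- move=> m /andP[h1 h2]; case: eqP => [_|ne].
    rewrite /ph size_drop_poly; move: hp; rewrite mulSn; lia.
  by apply: e2; rewrite h1 /=; move: h2 ne; lia.
Qed.

End S3.

Section S4.
Variables (K : fieldType) (n : nat) (F H : 'M[{poly K}]_n).

Definition s1 (l : 'I_(nbar F H)) : 'I_n := tagnat.sig1 l.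
Definition s2 (l : 'I_(nbar F H)) : 'I_(qq F H (s1 l)).+1 := tagnat.sig2 l.

Definition sstn (l : 'I_(nbar F H)) : nat :=
  if s2 l == ord0 then rr F H (s1 l) else dmax F.

Lemma sstarE l : sstar F H l = Posz (sstn l).
Proof. by rewrite /sstar /sstar_row /sstn !mxE /s1 /s2; case: ifP. Qed.

Lemma EmatE r l : Emat F H r l =
  if r == s1 l then
    (if s2 l == ord0 then 1
     else 'X^(sdeg H (s1 l) - (qq F H (s1 l) - (s2 l : nat).-1) * dmax F)%N)
  else 0.
Proof. by rewrite /Emat !mxE. Qed.


Lemma Ebuild (p_ : 'I_n -> {poly K}) :
  (forall r, (size (p_ r) <= (sdeg H r).+1)%N) ->
  exists v : 'cV[{poly K}]_(nbar F H),
    Emat F H *m v = \col_r p_ r /\ forall l, (size (v l ord0) <= (sstn l).+1)%N.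
Proof.
move=> hp.
have hex : forall r : 'I_n, exists c : nat -> {poly K},
    [/\ p_ r = c 0%N + \sum_(1 <= m < (qq F H r).+1) c m * 'X^(rr F H r + (m.-1) * dmax F),
        (size (c 0%N) <= (rr F H r).+1)%N &
        forall m, (1 <= m <= qq F H r)%N -> (size (c m) <= (dmax F).+1)%N].
  move=> r; apply: expand; rewrite /qq /rr -divn_eq; exact: hp.
have [c hc] := fin_all_exists hex.
exists (\mxcol_r (\col_(m < (qq F H r).+1) c r m)); split.
  apply/matrixP=> a b; rewrite ord1 /Emat mul_mxrow_mxcol summxE.
  rewrite (bigD1 a) //= big1 ?addr0; last first.
    move=> r ne; rewrite !mxE big1 // => m _; rewrite !mxE.
    by rewrite eq_sym (negPf ne) mul0r.
  rewrite !mxE; case: (hc a) => e0 _ _; rewrite e0.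
  rewrite big_ord_recl !mxE eqxx /= mul1r; congr (_ + _).
  rewrite big_add1 /= big_mkord; apply: eq_bigr => m _.
  rewrite !mxE eqxx /= mulrC; congr (_ * 'X^_).
  have hs := divn_eq (sdeg H a) (dmax F).
  rewrite /qq /rr /bump /=.
  set q := (sdeg H a %/ dmax F)%N in hs *; set d := dmax F in hs *.
  set rm := (sdeg H a %% d)%N in hs *.
  have hm : (m < q)%N by have := ltn_ord m.
  rewrite mulnBl add0n; have : (m * d <= q * d)%N by rewrite leq_mul2r ltnW ?orbT.
  move: hs; set A := (q * d)%N; set B := (m * d)%N; lia.
move=> l; rewrite !mxE.
case: (hc (tagnat.sig1 l)) => _ h0 h1.
rewrite /sstn /s1 /s2; case: eqP => [->|ne]; first by [].
apply: h1; have := ltn_ord (tagnat.sig2 l); rewrite ltnS => ->; rewrite andbT lt0n.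
by apply/eqP=> e; apply: ne; apply: val_inj.
Qed.


Lemma Erow_bound (v : 'cV[{poly K}]_(nbar F H)) :
  (forall l, (size (v l ord0) <= (sstn l).+1)%N) ->
  forall r, (size ((Emat F H *m v) r ord0) <= (sdeg H r).+1)%N.
Proof.
move=> hv r; rewrite mxE; apply: size_sum_le => l _.
rewrite EmatE; case: eqP => [er|_]; last by rewrite mul0r size_poly0.
have := hv l; rewrite /sstn; case ne: (s2 l == ord0) => hvl.
  rewrite mul1r; apply: leq_trans hvl _; by rewrite er ltnS /rr leq_mod.
apply: leq_trans (size_polyMleq _ _) _; rewrite size_polyXn.
have hs := divn_eq (sdeg H (s1 l)) (dmax F).
have hm : (1 <= (s2 l : nat) <= qq F H (s1 l))%N.
  have := ltn_ord (s2 l); rewrite ltnS => ->; rewrite andbT lt0n.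
  by apply/eqP=> e; move/negbT/eqP: ne; apply; apply: val_inj.
rewrite er; move: hvl hs hm; rewrite /qq.
set q := (sdeg H (s1 l) %/ dmax F)%N; set d := dmax F; set m := (s2 l : nat).
move=> hvl hs hm.
have hB1 : (d <= (q - m.-1) * d)%N by rewrite leq_pmull // subn_gt0; lia.
have hB2 : ((q - m.-1) * d <= q * d)%N by rewrite leq_mul2r leq_subr orbT.
move: hvl hs hB1 hB2; set A := (q * d)%N; set B := ((q - m.-1) * d)%N; move: (sdeg H (s1 l) %% d)%N => rm; move: (sdeg H (s1 l)) (size (v l ord0)) => s sv; clear; lia.
Qed.

End S4.

Set Implicit Arguments. Unset Implicit Arguments.
Theorem mainTheorem4 (K : fieldType) (n : nat) (F H : 'M[{poly K}]_n)
    (Q R : 'M[{poly K}]_(n, nbar F H)) (k : nat)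
    (N : 'M[{poly K}]_(n + nbar F H, k)) :
  \det F != 0 ->
  col_reduced F ->
  hermite_form F H ->
  Emat F H = F *m Q + R ->
  (forall i j, (size (R i j) <= dmax F)%N) ->
  minimal_kernel_basis (row_mx F (- R)) N (kshift F H) ->
  let Nd := dsubmx N in
  let Nbar := selcols
      (fun j => cdeg_le (fun i => - sstar F H i) Nd j 0) Nd in
  let EN := Emat F H *m Nbar in
  column_basis EN H /\
  (forall j, col j EN != 0 ->
     cdeg (fun i => - (sdeg H i)%:Z) EN j = Some 0).
Proof.
move=> detF redF [[U [[V [UV VU]] HFU]] Hup Hmon Hred] eEFQR szR [[Nfr NA0 Nall] Nred].
move=> Nd Nbar EN.
set P := (fun j => cdeg_le (fun i => - sstar F H i) Nd j 0).
set f := @enum_val _ (mem P).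
have hNbar : Nbar = colsub f Nd by [].
have hFN : F *m usubmx N = R *m Nd.
  have := NA0; rewrite -{1}(vsubmxK N) mul_row_col mulNmx => /eqP.
  by rewrite subr_eq0 => /eqP.
have HV : H *m V = F by rewrite HFU -mulmxA UV mulmx1.
set W := V *m colsub f (Q *m Nd + usubmx N).
have hEN : EN = H *m W.
  have e : Emat F H *m Nd = F *m (Q *m Nd + usubmx N).
    by rewrite eEFQR mulmxDl mulmxDr mulmxA -hFN.
  by rewrite /EN hNbar /W mulmxA HV !mulmx_colsub e.
have detH : \det H != 0.
  have hU : \det U * \det V = 1 by rewrite -det_mulmx UV det1.
  rewrite HFU det_mulmx mulf_neq0 //; apply/eqP => e.
  by move: hU; rewrite e mul0r => /eqP; rewrite eq_sym oner_eq0.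
have frH : full_col_rank H.
  move=> v hv; have : \adj H *m (H *m v) = 0 by rewrite hv mulmx0.
  rewrite mulmxA mul_adj_mx mul_scalar_mx => /matrixP h.
  apply/matrixP => a b; have := h a b; rewrite !mxE => /eqP.
  by rewrite mulf_eq0 (negPf detH) /= => /eqP.
have /fin_all_exists [cN hcN] : forall l : 'I_k, exists c, cdeg (kshift F H) N l = Some c.
  by move=> l; apply: col_red_some Nred.
have /fin_all_exists [cF hcF] : forall l : 'I_n, exists c, cdeg (fun=> 0) F l = Some c.
  by move=> l; apply: col_red_some redF.
have cF0 : forall l, 0 <= cF l.
  move=> l; case: (cdegP (fun=> 0) F l) => [[e _]|[c [e [_ [i0 _ ec]]]]].
    by rewrite hcF in e.
  by have := hcF l; rewrite e ec => -[<-]; rewrite addr0.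
have hcol : forall i : 'I_n, exists w' : 'cV[{poly K}]_#|P|, col i H = EN *m w'.
  move=> i.
  have [v [hEv hv]] : exists v : 'cV[{poly K}]_(nbar F H),
      Emat F H *m v = \col_r H r i /\ forall l, (size (v l ord0) <= (sstn l).+1)%N.
    apply: Ebuild => r; rewrite /sdeg.
    case: (ltngtP r i) => [lt|gt|eq].
    - by rewrite Hup // size_poly0.
    - have := Hred r i gt; move: (size (H r i)) (size (H r r)) => a b; lia.
    - have -> : r = i by apply: val_inj.
      exact: leqSpred.
  have hEv' : Emat F H *m v = col i H by rewrite hEv; apply/matrixP=> a b; rewrite !mxE.
  set u := col i U - Q *m v.
  have hFu : F *m u = R *m v.
    have e1 : F *m col i U = col i H by rewrite HFU !colE mulmxA.
    rewrite /u mulmxBr e1 -hEv' eEFQR mulmxDl mulmxA.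
    by rewrite [_ + R *m v]addrC addrK.
  have hker : row_mx F (- R) *m col_mx u v = 0.
    by rewrite mul_row_col mulNmx hFu subrr.
  have [w hw] := Nall _ hker.
  have hvw : v = Nd *m w by rewrite /Nd mul_dsub_mx -hw col_mxKd.
  have hRv : forall r, (size ((R *m v) r ord0) <= (2 * dmax F)%N)%N.
    move=> r; rewrite mxE; apply: size_sum_le => l _.
    case: (eqVneq (R r l) 0) => [->|nzR]; first by rewrite mul0r size_poly0.
    apply: leq_trans (size_polyMleq _ _) _.
    have h1 := szR r l; have h2 := hv l.
    have h3 : (0 < size (R r l))%N by rewrite size_poly_gt0.
    have h4 : (sstn l <= dmax F)%N.
      rewrite /sstn; case: ifP => _ //; rewrite /rr ltnW // ltn_mod; lia.
    move: h1 h2 h3 h4; move: (size (R r l)) (size (v l ord0)) (sstn l) (dmax F).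
    move=> a b c d; lia.
  have hu : forall a, u a ord0 != 0 -> (size (u a ord0) <= (2 * dmax F).+1)%N.
    move=> a nz; have [c' hc' hle] := pdp redF hcF nz.
    case: (cdegP (fun=> 0) (F *m u) 0) => [[e _]|[c'' [e [_ [i0 nzi ec]]]]].
      by rewrite hc' in e.
    move: ec; rewrite hc' in e; case: e => <- ec.
    have h5 := hRv i0; rewrite -hFu in h5.
    have h6 : (0 < size ((F *m u) i0 ord0))%N by rewrite size_poly_gt0.
    have h7 := cF0 a.
    move: hle ec h5 h6 h7; rewrite /pdeg.
    clear hc'; move: (size (u a ord0)) (size ((F *m u) i0 ord0)) (cF a) (dmax F) c'.
    move=> x y z d c0; lia.
  have hbd : forall a, (N *m w) a ord0 != 0 -> pdeg ((N *m w) a ord0) + kshift F H a <= 0.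
    rewrite -hw => a; rewrite -(splitK a); case: (split a) => a' /=.
      rewrite col_mxEu /kshift.
      have -> : split (lshift (nbar F H) a') = inl a' := unsplitK (inl _ a').
      move=> nz; have := hu a' nz; rewrite /pdeg.
      move: (size (u a' ord0)) (dmax F) => x d; lia.
    rewrite col_mxEd /kshift.
    have -> : split (rshift n a') = inr a' := unsplitK (inr _ a').
    rewrite sstarE => nz; have := hv a'; rewrite /pdeg.
    move: (size (v a' ord0)) (sstn a') => x d; lia.
  have hsel : forall l, w l ord0 != 0 -> P l.
    move=> l nz; have [c' hc' hle] := pdp Nred hcN nz.
    have := cdeg_le_all hbd; rewrite /cdeg_le hc' => hc0.
    rewrite /P; apply: cdeg_le_all => a nz'.
    move: nz'; rewrite /Nd mxE => nz'.
    have := cdeg_bound (hcN l) nz'.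
    have -> : kshift F H (rshift n a) = - sstar F H a.
      by rewrite /kshift (unsplitK (inr _ a) : split (rshift n a) = inr a).
    move: hle hc0; rewrite /pdeg.
    clear hc'; move: (size (w l ord0)) (size (N (rshift n a) l)) (cN l) c' (sstar F H a).
    move=> x y z c0 s0; lia.
  pose w' : 'cV[{poly K}]_#|P| := \col_x w (f x) ord0.
  have hNw : Nd *m w = Nbar *m w'.
    apply/matrixP => a b; rewrite ord1 !mxE (bigID P) /= [X in _ + X]big1 ?addr0; last first.
      move=> l nP; case: (eqVneq (w l ord0) 0) => [->|nz]; first by rewrite mulr0.
      by rewrite (hsel l nz) in nP.
    rewrite (eq_bigl (fun l => l \in P)) // big_enum_val /=.
    by apply: eq_bigr => x _; rewrite hNbar !mxE.
  by exists w'; rewrite -hEv' hvw hNw /EN mulmxA.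
split.
  split => //; first by exists W.
  have /fin_all_exists [wf hwf] := hcol.
  exists (\matrix_(a, b) wf b a 0); apply/matrixP=> a b.
  have := hwf b => /matrixP/(_ a 0); rewrite !mxE => ->.
  by apply: eq_bigr => l _; rewrite !mxE.
move=> j hj.
have hPj : P (f j) by have := enum_valP j.
set v := col (f j) Nd.
have hv : forall l, (size (v l ord0) <= (sstn l).+1)%N.
  move=> l; rewrite /v mxE; case: (eqVneq (Nd l (f j)) 0) => [->|nz].
    by rewrite size_poly0.
  have := cdeg_leP hPj nz; rewrite sstarE /pdeg.
  move: (size (Nd l (f j))) (sstn l) => a b; lia.
have hEj : forall r, EN r j = (Emat F H *m v) r ord0.
  by move=> r; rewrite /EN hNbar !mxE; apply: eq_bigr => l _; rewrite !mxE.
have hb : forall r, (size (EN r j) <= (sdeg H r).+1)%N.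
  by move=> r; rewrite hEj; apply: Erow_bound.
have hHW : forall r, EN r j = \sum_a H r a * W a j by move=> r; rewrite hEN mxE.
have [a0 ha0] : exists a0, W a0 j != 0.
  apply/existsP; apply: contraNT hj => /existsPn hW; apply/eqP/matrixP => r b.
  rewrite ord1 [X in X = _]mxE [RHS]mxE -/EN hHW big1 // => a _.
  by have := hW a; rewrite negbK => /eqP ->; rewrite mulr0.
case: (@arg_minnP _ a0 (fun a => W a j != 0) (fun a => nat_of_ord a) ha0) => j0 hj0 hmin.
have hE0 : EN j0 j = H j0 j0 * W j0 j.
  rewrite hHW (bigD1 j0) //= big1 ?addr0 // => a ne.
  case: (ltngtP a j0) => [lt|gt|eq].
  - case: (eqVneq (W a j) 0) => [->|nz]; first by rewrite mulr0.
    by have := hmin a nz; rewrite leqNgt lt.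
  - by rewrite Hup // mul0r.
  - by move/eqP: ne; case; apply: val_inj.
have hH0 : H j0 j0 != 0 by apply: monic_neq0.
have hs0 : size (EN j0 j) = (size (H j0 j0) + size (W j0 j)).-1 by rewrite hE0 size_mul.
have hnz : EN j0 j != 0 by rewrite hE0 mulf_neq0.
have hsW : (0 < size (W j0 j))%N by rewrite size_poly_gt0.
case: (cdegP (fun i => - (sdeg H i)%:Z) EN j) => [[_ hz]|[c [e [hbd [i0 nz ec]]]]].
  by rewrite hz eqxx in hnz.
rewrite e; congr Some.
have h1 := hbd j0 hnz; have h2 := hb i0; have h3 := hb j0.
move: h1 h2 h3 ec hs0 hsW; rewrite /pdeg /sdeg.
move: (size (EN j0 j)) (size (EN i0 j)) (size (H j0 j0)) (size (H i0 i0)) (size (W j0 j)).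
move=> a b cc d ee; lia.
Qed.
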